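(* Let $\mathcal{S}$ be the regular $d$-dimensional $\delta$-grid, $1\le q<\infty$, and let $\Omega\subseteq[0,1]^d$ be a convex body containing a ball of radius at least $10d^{3/2}\delta$. Then for every $t>0$ and every $f\in B^q_{\mathcal{S}}(0;t;\Omega)$, $f(x)\ge-20dt$ for all $x\in\Omega$.
   Context: $\mathcal{S}=\{(k_1\delta,\dots,k_d\delta):k_i\in\mathbb{Z}\}$. $\ell_{\mathcal{S}}(f,\Omega,q)=\big(\frac{1}{\#(\Omega\cap\mathcal{S})}\sum_{s\in\Omega\cap\mathcal{S}}|f(s)|^q\big)^{1/q}$ and $B^q_{\mathcal{S}}(0;t;\Omega)=\{f:\Omega\to\mathbb{R}\ \text{convex}:\ \ell_{\mathcal{S}}(f,\Omega,q)\le t\}$. *)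

(* Defs.v *)
From HB Require Import structures.
From mathcomp Require Import all_boot all_order all_algebra.
From mathcomp Require Import all_classical all_reals all_analysis.
Unset Printing Implicit Defensive.
Import Order.TTheory GRing.Theory Num.Theory numFieldNormedType.Exports.
Local Open Scope ring_scope.
Local Open Scope classical_set_scope.

Section Defs.
Variable R : realType.
Variable d : nat.

Definition enorm (x : 'rV[R]_d) : R := Num.sqrt (\sum_(i < d) (x ord0 i) ^+ 2).

Definition eball (c : 'rV[R]_d) (r : R) : set 'rV[R]_d :=
  [set y | enorm (y - c) < r].

Definition unit_cube : set 'rV[R]_d := [set x | forall i, 0 <= x ord0 i <= 1].

Definition convex_set (O : set 'rV[R]_d) : Prop :=
  forall x y (l : R), O x -> O y -> 0 <= l <= 1 -> O (l *: x + (1 - l) *: y).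

Definition convex_body (O : set 'rV[R]_d) : Prop :=
  convex_set O /\ compact O /\ (interior O) !=set0.

(* f : Omega -> R convex (values outside Omega are irrelevant) *)
Definition convex_on (O : set 'rV[R]_d) (f : 'rV[R]_d -> R) : Prop :=
  forall x y (l : R), O x -> O y -> 0 <= l <= 1 ->
    f (l *: x + (1 - l) *: y) <= l * f x + (1 - l) * f y.

(* Grid points in [0,1]^d are exactly the points k*delta with
   k_i in {0, ..., truncn (1/delta)}; we index Omega ∩ S by these k. *)
Definition gidx (delta : R) := {ffun 'I_d -> 'I_(Num.truncn (delta^-1)).+1}.

Definition gpt (delta : R) (k : gidx delta) : 'rV[R]_d :=
  \row_i ((k i : nat)%:R * delta).

Definition in_OS (delta : R) (O : set 'rV[R]_d) : pred (gidx delta) :=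
  fun k => `[< O (gpt delta k) >].

Definition card_OS (delta : R) (O : set 'rV[R]_d) : nat := #|in_OS delta O|.

Definition ellS (delta : R) (f : 'rV[R]_d -> R) (O : set 'rV[R]_d) (q : R) : R :=
  ((card_OS delta O)%:R^-1 *
     \sum_(k in in_OS delta O) (`|f (gpt delta k)| `^ q)) `^ (q^-1).

Definition BqS (delta : R) (q t : R) (O : set 'rV[R]_d) : set ('rV[R]_d -> R) :=
  [set f | convex_on O f /\ ellS delta f O q <= t].

End Defs.

(* Main.v *)
Require Import Defs.
From HB Require Import structures.
From mathcomp Require Import all_boot all_order all_algebra.
From mathcomp Require Import all_classical all_reals all_analysis.
From mathcomp Require Import ring lra.
Import Order.TTheory GRing.Theory Num.Theory numFieldNormedType.Exports.
Local Open Scope ring_scope.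
Local Open Scope classical_set_scope.



Section OneD.
Context {R : realType}.
Implicit Types (u v p b mu l : R).

Definition C v : R := if v <= 0 then 0 else if v <= 1 then v else 1.
Ltac cases := repeat match goal with |- context[if ?a <= ?b then _ else _] => case: (lerP a b) => ? end.
Definition T u : R := C (u + 1) - C u.

Lemma C_ge0 v : 0 <= C v.
Proof. rewrite /C; cases; lra. Qed.
Lemma C_le1 v : C v <= 1.
Proof. rewrite /C; cases; lra. Qed.
Lemma C_le u v : u <= v -> C u <= C v.
Proof. rewrite /C => uv; cases; lra. Qed.
Lemma C_diff u v : C u - C v <= 1.
Proof. have := C_le1 u; have := C_ge0 v; lra. Qed.
Lemma C_0 v : v <= 0 -> C v = 0. Proof. rewrite /C => h; cases; lra. Qed.
Lemma C_1 v : 1 <= v -> C v = 1.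
Proof. rewrite /C => h; cases; lra. Qed.
Lemma C_id v : 0 <= v <= 1 -> C v = v.
Proof. rewrite /C => /andP[h0 h1]; cases; lra. Qed.

Lemma sumC n u : 0 <= u <= n%:R -> \sum_(j < n) C (u - j%:R) = u.
Proof.
elim: n u => [|n IH] u /=.
  by rewrite big_ord0 => /andP[? ?]; lra.
move=> /andP[h0 h1]; rewrite big_ord_recl /= subr0.
have [u1|u1] := lerP 1 u.
  rewrite C_1 // -[in RHS](subrK 1 u) addrC; congr (_ + _).
  rewrite -(IH (u - 1)); last by rewrite -natr1 in h1; apply/andP; split; lra.
  by apply: eq_bigr => i _; rewrite /bump /= -natr1; congr C; lra.
rewrite C_id; last by apply/andP; split; lra.
rewrite big1 ?addr0 // => i _; rewrite C_0 //; rewrite /bump /= -natr1.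
have : 0 <= (i : nat)%:R :> R by [].
lra.
Qed.

Lemma T_ge0 u : 0 <= T u.
Proof. rewrite /T subr_ge0; apply: C_le; lra. Qed.

Lemma T_neq0 u : T u != 0 -> -1 < u < 1.
Proof.
rewrite /T => h; apply/andP; split; rewrite ltNge; apply/negP => hu;
  move: h; [rewrite !C_0 ?subrr ?eqxx //| rewrite !C_1 ?subrr ?eqxx //]; lra.
Qed.

Lemma tent_sum1 n u : 0 <= u <= n%:R -> \sum_(k < n.+1) T (u - k%:R) = 1.
Proof.
move=> /andP[h0 h1]; rewrite /T sumrB.
rewrite (eq_bigr (fun k : 'I_n.+1 => C ((u + 1) - k%:R))); last by move=> k _; congr C; lra.
rewrite !sumC; first lra.
- apply/andP; split; rewrite -?natr1; lra.
- apply/andP; split; rewrite -?natr1; lra.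
Qed.

Lemma tent_bary n u : 0 <= u <= n%:R -> \sum_(k < n.+1) T (u - k%:R) * k%:R = u.
Proof.
elim: n u => [|n IH] u /=.
  move=> /andP[? ?]; have -> : u = 0 by lra.
  by rewrite big_ord_recl big_ord0 mulr0 addr0.
move=> /andP[h0 h1]; rewrite big_ord_recl /= mulr0 add0r.
have [u1|u1] := lerP 1 u.
  rewrite (eq_bigr (fun k : 'I_n.+1 => T ((u - 1) - k%:R) * k%:R + T ((u - 1) - k%:R))); last first.
    by move=> i _; rewrite /bump /= -natr1; rewrite mulrDr mulr1; congr (T _ * _ + T _); lra.
  rewrite big_split /= IH ?tent_sum1; first lra.
  - by rewrite -natr1 in h1; apply/andP; split; lra.
  - by rewrite -natr1 in h1; apply/andP; split; lra.
rewrite big_ord_recl /=.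
have b0 : forall i, bump 0 i = i.+1 by [].
rewrite !b0 big1 ?addr0; last first.
  move=> i _; rewrite /T !C_0 ?subrr ?mul0r //; rewrite -!natr1;
  have : 0 <= (i : nat)%:R :> R by []; lra.
rewrite mulr1 /T (C_0 (u - 1)); last lra.
by rewrite C_id; [lra| apply/andP; split; lra].
Qed.

Lemma T_tele mu u : 1 <= mu -> T u <= C (u + mu / 2 + 1 / 2) - C (u - mu / 2 + 1 / 2).
Proof.
move=> hmu; rewrite /T /C; cases; lra.
Qed.

Lemma tele_nat (F : nat -> R) n : \sum_(k < n) (F k.+1 - F k) = F n - F 0%N.
Proof. by rewrite -(big_mkord xpredT (fun k => F k.+1 - F k)) telescope_sumr. Qed.

Lemma tent_load mu b n : 1 <= mu -> \sum_(k < n) T (b + mu * k%:R) <= 1.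
Proof.
move=> hmu.
pose F (k : nat) := C (b + mu * k%:R - mu / 2 + 1 / 2).
apply: (le_trans (y := \sum_(k < n) (F k.+1 - F k))).
  apply: ler_sum => k _; rewrite /F.
  have -> : b + mu * (k.+1)%:R - mu / 2 + 1 / 2 = (b + mu * k%:R) + mu / 2 + 1 / 2.
    by rewrite -natr1 mulrDr mulr1; lra.
  exact: T_tele.
by rewrite tele_nat /F C_diff.
Qed.

Definition ov l p (j : nat) : R :=
  (C (p + l / 2 + 1 / 2 - j%:R) - C (p - l / 2 + 1 / 2 - j%:R)) / l.

Lemma ov_ge0 l p j : 0 < l -> 0 <= ov l p j.
Proof. move=> l0; rewrite /ov; apply: divr_ge0; last exact: ltW. rewrite subr_ge0; apply: C_le; lra. Qed.

Lemma ov_neq0 l p j : 0 < l <= 1 -> ov l p j != 0 -> -1 < p - j%:R < 1.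
Proof.
move=> /andP[l0 l1]; rewrite /ov => h; apply/andP; split; rewrite ltNge; apply/negP => hu;
  move: h; [rewrite !C_0 ?subrr ?mul0r ?eqxx //| rewrite !C_1 ?subrr ?mul0r ?eqxx //]; lra.
Qed.

Lemma ov_sum1 l p n : 0 < l -> 0 <= p - l / 2 + 1 / 2 -> p + l / 2 + 1 / 2 <= n%:R ->
  \sum_(j < n) ov l p j = 1.
Proof.
move=> l0 h1 h2; rewrite /ov -mulr_suml sumrB !sumC.
- by rewrite -[X in _ / X = _]/(l) ; field; lra.
- apply/andP; split; lra.
- apply/andP; split; lra.
Qed.

Lemma ov_load l a n j : 0 < l -> \sum_(k < n) ov l (a + l * k%:R) j <= l^-1.
Proof.
move=> l0.
pose F (k : nat) := C (a + l * k%:R - l / 2 + 1 / 2 - j%:R).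
have -> : \sum_(k < n) ov l (a + l * k%:R) j = \sum_(k < n) (F k.+1 - F k) / l.
  apply: eq_bigr => k _; rewrite /ov /F; congr ((C _ - C _) / _); rewrite -[k.+1%:R]natr1 mulrDr mulr1; lra.
rewrite -mulr_suml tele_nat ler_pdivrMr // mulVf ?gt_eqF //.
by rewrite /F C_diff.
Qed.

End OneD.



Section Jensen.
Context {R : realType}.

Lemma jensen_seq d (O : set 'rV[R]_d) (f : 'rV[R]_d -> R) (I : eqType) (r : seq I)
  (w : I -> R) (P : I -> 'rV[R]_d) :
  Defs.convex_set R d O -> convex_on R d O f -> (forall i, 0 <= w i) ->
  \sum_(i <- r) w i = 1 -> (forall i, w i != 0 -> O (P i)) ->
  O (\sum_(i <- r) w i *: P i) /\ f (\sum_(i <- r) w i *: P i) <= \sum_(i <- r) w i * f (P i).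
Proof.
move=> cO cf; elim: r w => [|i r IH] w hw.
  by rewrite big_nil => /esym/eqP; rewrite oner_eq0.
rewrite !big_cons => hs hP.
set B := \sum_(j <- r) w j.
have B0 : 0 <= B by apply: sumr_ge0.
have [Bz|Bnz] := eqVneq B 0.
  have : \sum_(j <- r) w j == 0 by rewrite -/B Bz.
  rewrite psumr_eq0 // => /allP hall.
  have z1 : \sum_(j <- r) w j *: P j = 0.
    by rewrite big_seq big1 // => j /hall /eqP ->; rewrite scale0r.
  have z2 : \sum_(j <- r) w j * f (P j) = 0.
    by rewrite big_seq big1 // => j /hall /eqP ->; rewrite mul0r.
  have wi1 : w i = 1 by move: hs; rewrite -/B Bz addr0.
  rewrite z1 z2 !addr0 wi1 scale1r mul1r; split => //.
  by apply: hP; rewrite wi1 oner_eq0.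
have Bp : 0 < B by rewrite lt_neqAle eq_sym Bnz B0.
have s1 : \sum_(j <- r) w j / B = 1 by rewrite -mulr_suml -/B mulfV.
have hP' : forall j, w j / B != 0 -> O (P j).
  by move=> j h; apply: hP; apply: contraNN h => /eqP ->; rewrite mul0r.
have [Zin Zf] := IH (fun j => w j / B) (fun j => divr_ge0 (hw j) B0) s1 hP'.
set Z := \sum_(j <- r) (w j / B) *: P j in Zin Zf.
have eZ : \sum_(j <- r) w j *: P j = B *: Z.
  rewrite /Z scaler_sumr; apply: eq_bigr => j _; rewrite scalerA; congr (_ *: _).
  by rewrite mulrC divfK.
have eF : \sum_(j <- r) w j * f (P j) = B * \sum_(j <- r) (w j / B) * f (P j).
  rewrite mulr_sumr; apply: eq_bigr => j _; rewrite mulrA; congr (_ * _).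
  by rewrite mulrC divfK.
have hB : B = 1 - w i by rewrite -hs /B; ring.
rewrite eZ eF.
have [wi0|win0] := eqVneq (w i) 0.
  have B1 : B = 1 by rewrite hB wi0 subr0.
  rewrite B1 wi0 scale0r mul0r !add0r scale1r mul1r; split => //.
  by rewrite -B1.
have Pin := hP i win0.
have wi01 : 0 <= w i <= 1 by apply/andP; split; [exact: hw|]; move: hB Bp; lra.
have e1 : w i *: P i + B *: Z = w i *: P i + (1 - w i) *: Z by rewrite -hB.
rewrite e1; split; first exact: cO.
apply: (le_trans (cf _ _ _ Pin Zin wi01)); rewrite -hB.
apply: lerD => //; apply: ler_wpM2l; [exact: B0|exact: Zf].
Qed.

Lemma bern (q b : R) : 1 <= q -> 0 <= b -> b <= b `^ q / q + (1 - q^-1).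
Proof.
move=> q1 b0.
have [->|qn1] := eqVneq q 1.
  by rewrite powRr1 // invr1 mulr1 subrr addr0.
have q1' : 1 < q by rewrite lt_neqAle eq_sym qn1 q1.
have q0 : 0 < q by lra.
pose p := q / (q - 1).
have p0 : 0 < p by rewrite /p divr_gt0 //; lra.
have hpq : q^-1 + p^-1 = 1.
  by rewrite /p invf_div; field; lra.
have := conjugate_powR b0 ler01 q0 p0 hpq.
rewrite mulr1 powR1 => h; apply: (le_trans h); rewrite lerD2l.
move: hpq; rewrite ?div1r ?mul1r; lra.
Qed.

Lemma power_mean (I : finType) (P : pred I) (a : I -> R) (q : R) : 1 <= q -> (0 < #|P|)%N ->
  (forall i, 0 <= a i) ->
  \sum_(i in P) a i <= #|P|%:R * ((#|P|%:R)^-1 * \sum_(i in P) a i `^ q) `^ q^-1.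
Proof.
move=> q1 NP a0.
set N : R := #|P|%:R.
have N0 : 0 < N by rewrite ltr0n.
have q0 : 0 < q by lra.
set E := N^-1 * _.
have E0 : 0 <= E.
  apply: mulr_ge0; first by rewrite invr_ge0 ltW.
  by apply: sumr_ge0 => i _; exact: powR_ge0.
set B := E `^ q^-1.
have [Bz|Bnz] := eqVneq B 0.
  have Ez : E = 0 by apply: powR_eq0_eq0 Bz.
  have Sz : \sum_(i in P) a i `^ q = 0.
    by move: Ez; rewrite /E => /eqP; rewrite mulf_eq0 invr_eq0 gt_eqF //= => /eqP.
  have az : forall i, P i -> a i = 0.
    move=> i Pi; apply: (@powR_eq0_eq0 _ _ q).
    by apply: (psumr_eq0P _ Sz) => // j _; exact: powR_ge0.
  by rewrite big1 ?mulr_ge0 ?powR_ge0 ?ler0n // => i /az.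
have Bp : 0 < B by rewrite lt_neqAle eq_sym Bnz powR_ge0.
have BqE : B `^ q = E by rewrite /B -powRrM mulVf ?gt_eqF // powRr1.
have Ep : 0 < E by rewrite -BqE powR_gt0.
pose b i := a i / B.
have ab : forall i, a i = b i * B by move=> i; rewrite /b divfK ?gt_eqF.
have sb : \sum_(i in P) b i `^ q = N.
  have : \sum_(i in P) a i `^ q = N * E by rewrite /E mulrA mulfV ?gt_eqF // mul1r.
  have -> : \sum_(i in P) a i `^ q = E * \sum_(i in P) b i `^ q.
    rewrite mulr_sumr; apply: eq_bigr => i _; rewrite ab powRM ?BqE; first by rewrite mulrC.
      exact: divr_ge0 (a0 i) (ltW Bp).
    exact: ltW.
  rewrite [N * E]mulrC => /mulfI; apply; rewrite gt_eqF //.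
have : \sum_(i in P) b i <= N.
  apply: (le_trans (y := \sum_(i in P) (b i `^ q / q + (1 - q^-1)))).
    by apply: ler_sum => i _; apply: bern => //; exact: divr_ge0 (a0 i) (ltW Bp).
  rewrite big_split /= -mulr_suml sb sumr_const -/N.
  rewrite -mulr_natr -/N.
  have -> : N / q + (1 - q^-1) * N = N by field; rewrite gt_eqF.
  done.
move=> hb.
rewrite (eq_bigr (fun i => b i * B)); last by move=> i _; rewrite ab.
by rewrite -mulr_suml; apply: ler_wpM2r => //; exact: ltW.
Qed.

End Jensen.



Section Multi.
Context {R : realType}.
Variables (d : nat) (dl : R).
Local Notation K := (Num.truncn dl^-1).
Local Notation G := (gidx R d dl).
Implicit Types (y p : 'rV[R]_d) (v g : G) (l : R).

Definition tau (y : 'rV[R]_d) (v : G) : R := \prod_i T (y ord0 i / dl - (v i : nat)%:R).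
Definition wov (l : R) (p : 'rV[R]_d) (g : G) : R := \prod_i ov l (p ord0 i / dl) (g i).

Lemma tau_ge0 y v : 0 <= tau y v.
Proof. by apply: prodr_ge0 => i _; exact: T_ge0. Qed.

Lemma wov_ge0 l p g : 0 < l -> 0 <= wov l p g.
Proof. by move=> l0; apply: prodr_ge0 => i _; exact: ov_ge0. Qed.

Lemma tau_sum1 y : (forall i, 0 <= y ord0 i / dl <= K%:R) -> \sum_(v : G) tau y v = 1.
Proof.
move=> hy; rewrite /tau.
rewrite -(bigA_distr_bigA (fun i (k : 'I_K.+1) => T (y ord0 i / dl - (k : nat)%:R))) /=.
by rewrite big1 // => i _; apply: tent_sum1.
Qed.

Lemma tau_bary y : 0 < dl -> (forall i, 0 <= y ord0 i / dl <= K%:R) ->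
  \sum_(v : G) tau y v *: gpt R d dl v = y.
Proof.
move=> dl0 hy; apply/rowP => i; rewrite summxE.
pose F j (k : 'I_K.+1) := T (y ord0 j / dl - (k : nat)%:R) * (if j == i then (k : nat)%:R * dl else 1).
have -> : \sum_(v : G) (tau y v *: gpt R d dl v) ord0 i = \sum_(v : G) \prod_j F j (v j).
  apply: eq_bigr => v _; rewrite !mxE /F big_split /= /tau; congr (_ * _).
  rewrite (bigD1 i) //= eqxx (big1 _ _ (fun j => if j == i then (v j : nat)%:R * dl else 1)) ?mulr1 //.
  by move=> j ji; rewrite (negbTE ji).
rewrite -(bigA_distr_bigA F) (bigD1 i) //= [X in _ * X]big1 ?mulr1; last first.
  move=> j /negbTE ji; rewrite /F; under eq_bigr => k _ do rewrite ji mulr1.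
  exact: tent_sum1.
rewrite /F; under eq_bigr => k _ do rewrite eqxx mulrA.
by rewrite -mulr_suml tent_bary // divfK // gt_eqF.
Qed.

Lemma tau_neq0 y v : 0 < dl -> tau y v != 0 ->
  forall i, `|y ord0 i - (v i : nat)%:R * dl| < dl.
Proof.
move=> dl0 /prodf_neq0 h i; have /T_neq0 := h i isT.
rewrite -ltr_norml => h1.
have e : y ord0 i - (v i : nat)%:R * dl = (y ord0 i / dl - (v i : nat)%:R) * dl.
  by rewrite mulrBl divfK // gt_eqF.
by rewrite e normrM (gtr0_norm dl0) -[X in _ < X]mul1r ltr_pM2r.
Qed.

Lemma tau_load (yv : G -> 'rV[R]_d) (b : 'I_d -> R) mu v : 1 <= mu ->
  (forall g i, yv g ord0 i / dl = b i + mu * (g i : nat)%:R) ->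
  \sum_(g : G) tau (yv g) v <= 1.
Proof.
move=> mu1 hy.
have -> : \sum_(g : G) tau (yv g) v =
   \prod_i \sum_(k : 'I_K.+1) T ((b i - (v i : nat)%:R) + mu * (k : nat)%:R).
  rewrite (bigA_distr_bigA (fun i (k : 'I_K.+1) => T ((b i - (v i : nat)%:R) + mu * (k : nat)%:R))).
  apply: eq_bigr => g _; apply: eq_bigr => i _; rewrite hy; congr T; lra.
apply: (le_trans (y := \prod_(i < d) (1:R))); last by rewrite big1.
apply: ler_prod => i _; apply/andP; split.
  by apply: sumr_ge0 => k _; exact: T_ge0.
exact: tent_load.
Qed.

Lemma wov_sum1 l p : 0 < l ->
  (forall i, 0 <= p ord0 i / dl - l / 2 + 1 / 2 /\ p ord0 i / dl + l / 2 + 1 / 2 <= K.+1%:R) ->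
  \sum_(g : G) wov l p g = 1.
Proof.
move=> l0 hp; rewrite /wov.
rewrite -(bigA_distr_bigA (fun i (k : 'I_K.+1) => ov l (p ord0 i / dl) k)) /=.
rewrite big1 // => i _; have [h1 h2] := hp i.
exact: ov_sum1.
Qed.

Lemma wov_neq0 l p g : 0 < dl -> 0 < l <= 1 -> wov l p g != 0 ->
  forall i, `|p ord0 i - (g i : nat)%:R * dl| < dl.
Proof.
move=> dl0 hl /prodf_neq0 h i; have := @ov_neq0 R l (p ord0 i / dl) (g i) hl (h i isT).
rewrite -ltr_norml => h1.
have e : p ord0 i - (g i : nat)%:R * dl = (p ord0 i / dl - (g i : nat)%:R) * dl.
  by rewrite mulrBl divfK // gt_eqF.
by rewrite e normrM (gtr0_norm dl0) -[X in _ < X]mul1r ltr_pM2r.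
Qed.

Lemma wov_load l (pv : G -> 'rV[R]_d) (a : 'I_d -> R) g : 0 < l ->
  (forall h i, pv h ord0 i / dl = a i + l * (h i : nat)%:R) ->
  \sum_(h : G) wov l (pv h) g <= l^-1 ^+ d.
Proof.
move=> l0 hp.
have -> : \sum_(h : G) wov l (pv h) g =
   \prod_i \sum_(k : 'I_K.+1) ov l (a i + l * (k : nat)%:R) (g i).
  rewrite (bigA_distr_bigA (fun i (k : 'I_K.+1) => ov l (a i + l * (k : nat)%:R) (g i))).
  by apply: eq_bigr => h _; apply: eq_bigr => i _; rewrite hp.
apply: (le_trans (y := \prod_(i < d) l^-1)); last by rewrite prodr_const card_ord.
apply: ler_prod => i _; apply/andP; split.
  by apply: sumr_ge0 => k _; exact: ov_ge0.
exact: ov_load.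
Qed.

End Multi.



Section Geo.
Context {R : realType}.

Lemma cube_in_ball d (c z : 'rV[R]_d) (r a : R) : (0 < d)%N -> 0 <= a ->
  d%:R * a ^+ 2 <= r ^+ 2 -> 0 <= r ->
  (forall i, `|z ord0 i - c ord0 i| < a) -> enorm R d (z - c) < r.
Proof.
move=> d0 a0 hr r0 hz; rewrite /enorm.
have hs : \sum_(i < d) ((z - c) ord0 i) ^+ 2 < r ^+ 2.
  apply: (lt_le_trans (y := \sum_(i < d) a ^+ 2)); last by rewrite sumr_const card_ord -mulr_natl.
  apply: ltr_sum; first by apply/hasP; exists (Ordinal d0); rewrite ?mem_index_enum.
  move=> i _; rewrite !mxE; have := hz i; rewrite ltr_norml => /andP[h1 h2]; nra.
have s0 : 0 <= \sum_(i < d) ((z - c) ord0 i) ^+ 2 by apply: sumr_ge0 => i _; exact: sqr_ge0.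
rewrite -(ger0_norm r0) -sqrtr_sqr ltr_sqrt //; lra.
Qed.

Definition ev d (i : 'I_d) (e : R) : 'rV[R]_d := \row_j (if j == i then e else 0).
Arguments ev {d}.

Lemma margin d (O : set 'rV[R]_d) (q p : 'rV[R]_d) (a b e : R) :
  O `<=` unit_cube R d ->
  (forall z : 'rV[R]_d, (forall j, `|z ord0 j - q ord0 j| < a) -> O z) ->
  (forall j, `|p ord0 j - q ord0 j| < b) -> b + e <= a -> 0 <= e ->
  forall i, e <= p ord0 i <= 1 - e.
Proof.
move=> Oc hq hp hab e0 i.
have key : forall s : R, `|s| = e -> O (p + ev i s).
  move=> s hs; apply: hq => j; rewrite !mxE.
  case: eqP => _.
    rewrite addrAC; apply: (le_lt_trans (ler_normD _ _)); rewrite hs.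
    by apply: (lt_le_trans (y := b + e)); [rewrite ltrD2r|].
  by rewrite addr0 (lt_le_trans (hp j)) //; lra.
have /Oc/(_ i) := key e (ger0_norm e0).
have ne : `|- e| = e by rewrite normrN ger0_norm.
have /Oc/(_ i) := key (- e) ne.
rewrite !mxE eqxx => /andP[h1 _] /andP[_ h2].
apply/andP; split; lra.
Qed.

End Geo.



Lemma bernoulli_ge {R : realType} n (a : R) : 0 <= a <= 1 -> 1 - n%:R * a <= (1 - a) ^+ n.
Proof.
move=> /andP[a0 a1]; elim: n => [|n IH]; first by rewrite mul0r subr0 expr0.
rewrite exprSr -natr1.
apply: (le_trans (y := (1 - n%:R * a) * (1 - a))).
  have : 0 <= n%:R * a * a by rewrite mulr_ge0 // mulr_ge0.
  move=> h; rewrite mulrDl mul1r; nra.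
by apply: ler_wpM2r => //; lra.
Qed.

Lemma coordE {R : realType} d (a u v : 'rV[R]_d) (b : R) i :
  (a + b *: (u - v)) ord0 i = a ord0 i + b * (u ord0 i - v ord0 i).
Proof. by rewrite !mxE. Qed.

Theorem lemma9p4 (R : realType) (d : nat) (delta q : R) (O : set 'rV[R]_d) :
  (0 < d)%N -> 0 < delta -> 1 <= q ->
  convex_body R d O -> O `<=` unit_cube R d ->
  (exists (c : 'rV[R]_d) (r : R),
      10 * (d%:R `^ (3 / 2)) * delta <= r /\ eball R d c r `<=` O) ->
  forall (t : R), 0 < t ->
  forall f, BqS R d delta q t O f ->
  forall x, O x -> - (20 * d%:R * t) <= f x.
Proof.
move=> d0 dl0 q1 [cO _] Oc [c [r [hr hball]]] t t0 f [cf hell] x Ox.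
set dd : R := d%:R.
have dd1 : 1 <= dd by rewrite /dd ler1n.
have p32 : dd `^ (3 / 2) = dd * Num.sqrt dd.
  have -> : (3 / 2 : R) = 1 + 2^-1 by field.
  rewrite powRD; last by apply/implyP => _; rewrite /dd pnatr_eq0 -lt0n.
  by rewrite powRr1 ?powR12_sqrt //; lra.
rewrite p32 in hr.
set rho := 10 * dd * delta.
have cube : forall z : 'rV[R]_d, (forall i, `|z ord0 i - c ord0 i| < rho) -> O z.
  move=> z hz; apply: hball; rewrite /eball /=; apply: cube_in_ball hz => //.
  - by rewrite /rho; apply: mulr_ge0; [lra|exact: ltW].
  - set u := Num.sqrt dd in hr.
    have u0 : 0 <= u by exact: sqrtr_ge0.
    have uu : u ^+ 2 = dd by rewrite sqr_sqrtr //; lra.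
    have h0 : 0 <= 10 * (dd * u) * delta by rewrite mulr_ge0 ?mulr_ge0 //; lra.
    have := lerXn2r 2 (h0 : _ \in Num.nneg) (le_trans h0 hr : _ \in Num.nneg) hr.
    rewrite /rho !exprMn uu; nra.
  - apply: le_trans hr; rewrite mulr_ge0 ?mulr_ge0 ?sqrtr_ge0 //; lra.
set eps := (2 * dd)^-1.
have deps : dd * eps = 1 / 2 by rewrite /eps; field; lra.
have eps0 : 0 < eps by rewrite /eps invr_gt0; lra.
have eps2 : eps <= 1 / 2 by nra.
set s := 1 - eps.
set eta := 3 / 5 * eps.
set sg := 1 - eta.
set lam := s * sg.
have s0 : 0 < s by rewrite /s; lra.
have s2 : 1 / 2 <= s by rewrite /s; lra.
have s1 : s < 1 by rewrite /s; lra.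
have eta0 : 0 < eta by rewrite /eta; lra.
have eta1 : eta <= 3 / 10 by rewrite /eta; lra.
have sg0 : 0 < sg by rewrite /sg /eta; lra.
have lam0 : 0 < lam by rewrite /lam mulr_gt0.
have lam1 : lam <= 1 by rewrite /lam /sg /s; nra.
have etarho : eta * rho = 3 * delta.
  have -> : eta * rho = 6 * (dd * eps) * delta by rewrite /eta /rho; field.
  rewrite deps; lra.
pose gp := gpt R d delta.
pose qh h : 'rV[R]_d := c + sg *: (gp h - c).
pose psi h : 'rV[R]_d := x + s *: (qh h - x).
pose yv g : 'rV[R]_d := x + s^-1 *: (gp g - x).
have box_q : forall h, O (gp h) -> forall z : 'rV[R]_d,
    (forall j, `|z ord0 j - qh h ord0 j| < 3 * delta) -> O z.
  move=> h Oh z hz.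
  set w := c + eta^-1 *: (z - qh h).
  have Ow : O w.
    apply: cube => i; rewrite /w coordE addrAC subrr add0r normrM gtr0_norm ?invr_gt0 //.
    by rewrite mulrC ltr_pdivrMr // mulrC etarho.
  have -> : z = sg *: gp h + (1 - sg) *: w.
    by apply/rowP => i; rewrite /w /qh /sg !mxE; field; rewrite gt_eqF.
  by apply: cO => //; apply/andP; split; rewrite /sg; lra.
have box_psi : forall h, O (gp h) -> forall z : 'rV[R]_d,
    (forall j, `|z ord0 j - psi h ord0 j| < 3 * s * delta) -> O z.
  move=> h Oh z hz.
  set w := qh h + s^-1 *: (z - psi h).
  have Ow : O w.
    apply: (box_q h Oh) => i; rewrite /w coordE addrAC subrr add0r normrM gtr0_norm ?invr_gt0 //.
    by rewrite mulrC ltr_pdivrMr // -mulrA (mulrC delta) mulrA.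
  have -> : z = s *: w + (1 - s) *: x.
    by apply/rowP => i; rewrite /w /psi !mxE; field; rewrite gt_eqF.
  by apply: cO => //; apply/andP; split; lra.
set K := Num.truncn delta^-1.
have hK : delta^-1 < K.+1%:R by exact: truncnS_gt.
have gpE : forall g i, gp g ord0 i = (g i : nat)%:R * delta by move=> g i; rewrite mxE.
have key : forall h g, O (gp h) -> wov d delta lam (psi h) g != 0 ->
   [/\ O (gp g),
       (1 - s) * (- f x) <= `|f (gp g)| + s * \sum_(v : gidx R d delta) tau d delta (yv g) v * `|f (gp v)|
     & forall v, tau d delta (yv g) v != 0 -> O (gp v)].
  move=> h g Oh hw.
  have lam01 : 0 < lam <= 1 by rewrite lam0 lam1.
  have hg := @wov_neq0 R d delta lam (psi h) g dl0 lam01 hw.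
  have Og : O (gp g).
    apply: (box_psi h Oh) => j; rewrite distrC gpE.
    apply: (lt_le_trans (hg j)); nra.
  have hyq : forall j, `|yv g ord0 j - qh h ord0 j| < 2 * delta.
    move=> j.
    have -> : yv g ord0 j - qh h ord0 j = s^-1 * (gp g ord0 j - psi h ord0 j).
      by rewrite /yv /psi /qh !mxE; field; rewrite gt_eqF.
    rewrite normrM gtr0_norm ?invr_gt0 // mulrC ltr_pdivrMr // gpE distrC.
    apply: (lt_le_trans (hg j)); nra.
  have Oyb : forall z : 'rV[R]_d, (forall j, `|z ord0 j - yv g ord0 j| < delta) -> O z.
    move=> z hz; apply: (box_q h Oh) => j.
    have -> : z ord0 j - qh h ord0 j = (z ord0 j - yv g ord0 j) + (yv g ord0 j - qh h ord0 j) by ring.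
    apply: (le_lt_trans (ler_normD _ _)); have := hz j; have := hyq j; lra.
  have Oy : O (yv g) by apply: Oyb => j; rewrite subrr normr0.
  have yr : forall i, 0 <= yv g ord0 i / delta <= K%:R.
    have e3 : 2 * delta + delta <= 3 * delta by lra.
    have hm := @margin R d O (qh h) (yv g) (3 * delta) (2 * delta) delta Oc (box_q h Oh) hyq e3 (ltW dl0).
    move=> i; have /andP[m1 m2] := hm i.
    apply/andP; split; first by rewrite divr_ge0 //; [apply: le_trans m1; exact: ltW | exact: ltW].
    rewrite ler_pdivrMr //.
    have h1 : delta^-1 * delta < K.+1%:R * delta by rewrite ltr_pM2r.
    rewrite mulVf ?gt_eqF // in h1.
    have h2 : K.+1%:R * delta = K%:R * delta + delta by rewrite -natr1 mulrDl mul1r.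
    lra.
  have hs1 := @tau_sum1 R d delta (yv g) yr.
  have hbary := @tau_bary R d delta (yv g) dl0 yr.
  have hO : forall v, tau d delta (yv g) v != 0 -> O (gp v).
    move=> v hv; apply: Oyb => j; rewrite distrC gpE.
    exact: (@tau_neq0 R d delta (yv g) v dl0 hv j).
  have [_ hJ] := @jensen_seq R d O f _ (index_enum (gidx R d delta)) (tau d delta (yv g)) gp
     cO cf (@tau_ge0 R d delta (yv g)) hs1 hO.
  rewrite hbary in hJ.
  have conv : f (gp g) <= s * f (yv g) + (1 - s) * f x.
    have -> : gp g = s *: yv g + (1 - s) *: x.
      by apply/rowP => i; rewrite /yv !mxE; field; rewrite gt_eqF.
    by apply: cf => //; apply/andP; split; lra.
  have habs : \sum_(v : gidx R d delta) tau d delta (yv g) v * f (gp v) <=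
              \sum_(v : gidx R d delta) tau d delta (yv g) v * `|f (gp v)|.
    apply: ler_sum => v _; apply: ler_wpM2l; [exact: tau_ge0 | exact: ler_norm].
  have hn : - f (gp g) <= `|f (gp g)| by rewrite -normrN ler_norm.
  have h3 : s * f (yv g) <= s * \sum_(v : gidx R d delta) tau d delta (yv g) v * `|f (gp v)|.
    by apply: ler_wpM2l; [lra | exact: le_trans hJ habs].
  split => //; lra.
set GG := in_OS R d delta O.
have inG : forall k, (k \in GG) = `[< O (gp k) >] by [].
have rho0 : 0 < rho by rewrite /rho mulr_gt0 //; lra.
have Oc0 : O c by apply: cube => i; rewrite subrr normr0.
have N0 : (0 < #|GG|)%N.
  apply/card_gt0P.
  pose k0 : gidx R d delta := [ffun i => inord (Num.truncn (c ord0 i / delta))].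
  exists k0; rewrite inG; apply/asboolP; apply: cube => i.
  have /andP[c0 c1] := Oc _ Oc0 i.
  have ci0 : 0 <= c ord0 i / delta by rewrite divr_ge0 // ltW.
  have tle : (Num.truncn (c ord0 i / delta) < K.+1)%N.
    rewrite ltnS; apply: le_truncn; rewrite -[X in _ <= X]mul1r; apply: ler_wpM2r => //; rewrite invr_ge0; exact: ltW.
  rewrite gpE /k0 ffunE inordK //.
  have /andP[t1 t2] := truncn_itv ci0.
  set n := Num.truncn _ in t1 t2 tle *.
  have e1 : n%:R * delta <= c ord0 i by rewrite -ler_pdivlMr.
  have e2 : c ord0 i < n%:R * delta + delta.
    by move: t2; rewrite ltr_pdivrMr // -natr1 mulrDl mul1r.
  rewrite distrC ger0_norm; last lra.
  have : delta <= rho by rewrite /rho; nra.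
  lra.
have hS : \sum_(k in GG) `|f (gp k)| <= #|GG|%:R * t.
  apply: (le_trans (@power_mean R _ GG (fun k => `|f (gp k)|) q q1 N0 (fun k => normr_ge0 _))).
  by apply: ler_wpM2l => //; exact: hell.
have psir : forall h, O (gp h) -> forall i,
    0 <= psi h ord0 i / delta - lam / 2 + 1 / 2 /\ psi h ord0 i / delta + lam / 2 + 1 / 2 <= K.+1%:R.
  move=> h Oh i.
  have e3 : (3 * s * delta - delta) + delta <= 3 * s * delta by lra.
  have hp : forall j, `|psi h ord0 j - psi h ord0 j| < 3 * s * delta - delta.
    by move=> j; rewrite subrr normr0; nra.
  have /andP[m1 m2] := @margin R d O (psi h) (psi h) (3 * s * delta) (3 * s * delta - delta) delta
    Oc (box_psi h Oh) hp e3 (ltW dl0) i.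
  have u1 : 1 <= psi h ord0 i / delta by rewrite ler_pdivlMr // mul1r.
  have u2 : psi h ord0 i / delta <= delta^-1 - 1.
    rewrite ler_pdivrMr // mulrBl mul1r mulVf ?gt_eqF //; lra.
  split; lra.
have wsum : forall h, O (gp h) -> \sum_(g : gidx R d delta) wov d delta lam (psi h) g = 1.
  by move=> h Oh; apply: (@wov_sum1 R d delta lam (psi h) lam0) => i; exact: psir h Oh i.
set M := - f x.
pose Phi g := `|f (gp g)| + s * \sum_(v : gidx R d delta) tau d delta (yv g) v * `|f (gp v)|.
pose W g := \sum_(h in GG) wov d delta lam (psi h) g.
have step1 : #|GG|%:R * ((1 - s) * M) <= \sum_(h in GG) \sum_(g : gidx R d delta) wov d delta lam (psi h) g * Phi g.
  have -> : #|GG|%:R * ((1 - s) * M) =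
      \sum_(h in GG) \sum_(g : gidx R d delta) wov d delta lam (psi h) g * ((1 - s) * M).
    rewrite (eq_bigr (fun _ => (1 - s) * M)); first by rewrite sumr_const mulr_natl.
    move=> h; rewrite inG => /asboolP Oh; by rewrite -mulr_suml wsum ?mul1r.
  apply: ler_sum => h; rewrite inG => /asboolP Oh; apply: ler_sum => g _.
  have [->|hne] := eqVneq (wov d delta lam (psi h) g) 0; first by rewrite !mul0r.
  have [_ hk _] := key h g Oh hne.
  by apply: ler_wpM2l => //; exact: wov_ge0.
have step2 : \sum_(h in GG) \sum_(g : gidx R d delta) wov d delta lam (psi h) g * Phi g =
    \sum_(g : gidx R d delta) W g * Phi g.
  by rewrite exchange_big /=; apply: eq_bigr => g _; rewrite /W mulr_suml.
set S := \sum_(k in GG) `|f (gp k)|.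
have restrict : forall (F : gidx R d delta -> R) (c0 : R),
    (forall g, g \notin GG -> F g = 0) -> (forall g, g \in GG -> F g <= c0 * `|f (gp g)|) ->
    \sum_(g : gidx R d delta) F g <= c0 * S.
  move=> F c0 F0 Fle.
  rewrite (bigID (fun g => g \in GG)) /= [X in _ + X]big1 ?addr0; last by move=> g /F0.
  by rewrite /S mulr_sumr; apply: ler_sum => g /Fle.
have sub_le : forall (F : gidx R d delta -> R), (forall h, 0 <= F h) ->
    \sum_(h in GG) F h <= \sum_(h : gidx R d delta) F h.
  move=> F F0; rewrite [X in _ <= X](bigID (fun h => h \in GG)) /= lerDl.
  by apply: sumr_ge0 => h _.
pose a i := (x ord0 i + s * (c ord0 i - sg * c ord0 i - x ord0 i)) / delta.
have hpsi : forall h i, psi h ord0 i / delta = a i + lam * (h i : nat)%:R.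
  by move=> h i; rewrite /psi /qh /lam /a !mxE; field; rewrite gt_eqF.
pose b i := (x ord0 i - s^-1 * x ord0 i) / delta.
have hyv : forall g i, yv g ord0 i / delta = b i + s^-1 * (g i : nat)%:R.
  by move=> g i; rewrite /yv /b !mxE; field; rewrite !gt_eqF.
set L := lam^-1 ^+ d.
have WL : forall g, W g <= L.
  move=> g; apply: le_trans (sub_le _ (fun h => @wov_ge0 R d delta lam (psi h) g lam0)) _.
  exact: (@wov_load R d delta lam psi a g lam0 hpsi).
have W0 : forall g, g \notin GG -> W g = 0.
  move=> g hg; apply: big1 => h; rewrite inG => /asboolP Oh.
  apply/eqP; apply: contraNT hg => hne; have [Og _ _] := key h g Oh hne.
  by rewrite inG; apply/asboolP.
have P1 : \sum_(g : gidx R d delta) W g * `|f (gp g)| <= L * S.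
  apply: restrict => g hg; first by rewrite W0 ?mul0r.
  by apply: ler_wpM2r => //.
have mu1 : 1 <= s^-1 by rewrite invf_ge1 //; lra.
have P2 : \sum_(v : gidx R d delta) (\sum_(g : gidx R d delta) W g * tau d delta (yv g) v) * `|f (gp v)| <= L * S.
  apply: restrict => v hv.
    rewrite big1 ?mul0r // => g _; rewrite /W mulr_suml; apply: big1 => h; rewrite inG => /asboolP Oh.
    have [->|hne] := eqVneq (wov d delta lam (psi h) g) 0; first by rewrite mul0r.
    have [->|htau] := eqVneq (tau d delta (yv g) v) 0; first by rewrite mulr0.
    have [_ _ hO] := key h g Oh hne.
    by move: hv; rewrite inG => /asboolP; have := hO v htau.
  apply: ler_wpM2r => //.
  apply: (le_trans (y := \sum_(g : gidx R d delta) L * tau d delta (yv g) v)).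
    by apply: ler_sum => g _; apply: ler_wpM2r => //; exact: tau_ge0.
  rewrite -mulr_sumr -[X in _ <= X]mulr1; apply: ler_wpM2l.
    by rewrite /L exprn_ge0 // invr_ge0 ltW.
  exact: (@tau_load R d delta yv b (s^-1) v mu1 hyv).
have step3 : \sum_(g : gidx R d delta) W g * Phi g <= (1 + s) * (L * S).
  have -> : \sum_(g : gidx R d delta) W g * Phi g =
      \sum_(g : gidx R d delta) W g * `|f (gp g)| +
      s * \sum_(v : gidx R d delta) (\sum_(g : gidx R d delta) W g * tau d delta (yv g) v) * `|f (gp v)|.
    rewrite /Phi; under eq_bigr => g _ do rewrite mulrDr.
    rewrite big_split /=; congr (_ + _).
    transitivity (s * \sum_(g : gidx R d delta) \sum_(v : gidx R d delta)
                    W g * tau d delta (yv g) v * `|f (gp v)|).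
      rewrite mulr_sumr; apply: eq_bigr => g _; rewrite mulrCA mulr_sumr.
      by congr (_ * _); apply: eq_bigr => v _; rewrite mulrA.
    by rewrite exchange_big /=; congr (_ * _); apply: eq_bigr => v _; rewrite mulr_suml.
  have : s * \sum_(v : gidx R d delta) (\sum_(g : gidx R d delta) W g * tau d delta (yv g) v) * `|f (gp v)|
     <= s * (L * S) by apply: ler_wpM2l => //; lra.
  move: P1; lra.
have L0 : 0 <= L by rewrite /L exprn_ge0 // invr_ge0 ltW.
have S0 : 0 <= S by apply: sumr_ge0 => k _.
have NN : 0 < #|GG|%:R :> R by rewrite ltr0n.
have main : #|GG|%:R * ((1 - s) * M) <= #|GG|%:R * ((1 + s) * L * t).
  apply: (le_trans step1); rewrite step2; apply: (le_trans step3).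
  rewrite -mulrA [X in _ <= X]mulrC -mulrA; apply: ler_wpM2l; first lra.
  by rewrite -mulrA; apply: ler_wpM2l => //; rewrite mulrC.
rewrite ler_pM2l // in main.
have L5 : L <= 5.
  have a01 : 0 <= 8 / 5 * eps <= 1 by apply/andP; split; lra.
  have hb := @bernoulli_ge R d (8 / 5 * eps) a01.
  have hda : d%:R * (8 / 5 * eps) = 4 / 5 by rewrite -/dd mulrCA deps; field.
  have hla : 1 - 8 / 5 * eps <= lam by rewrite /lam /s /sg /eta; nra.
  have l1 : 0 <= 1 - 8 / 5 * eps by lra.
  have hpow := lerXn2r d (l1 : _ \in Num.nneg) (ltW lam0 : _ \in Num.nneg) hla.
  have lp : 1 / 5 <= lam ^+ d by lra.
  have LL : L * lam ^+ d = 1 by rewrite /L exprVn mulVf // expf_neq0 // gt_eqF.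
  nra.
have e1 : 1 - s = eps by rewrite /s; lra.
rewrite e1 in main.
have h2 : eps * M <= (1 + s) * 5 * t.
  apply: (le_trans main); rewrite -!mulrA; apply: ler_wpM2l; first lra.
  by apply: ler_wpM2r; [exact: ltW|].
have e2 : 2 * dd * eps = 1 by rewrite /eps mulfV // gt_eqF //; lra.
have hM : 2 * dd * (eps * M) = M by rewrite mulrA e2 mul1r.
have hR : 2 * dd * ((1 + s) * 5 * t) = 20 * dd * t - 5 * t * (2 * dd * eps) by rewrite /s; ring.
rewrite e2 mulr1 in hR.
have h4 : 2 * dd * (eps * M) <= 2 * dd * ((1 + s) * 5 * t) by apply: ler_wpM2l => //; lra.
rewrite hM hR in h4.
move: h4; rewrite /M; lra.
Qed.
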